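(* Let $q$ be a prime number and $\mathbb{A}=\mathbb{Q}\cap\,]0,1[$. Then $\mathbb{A}\text{-}\mathcal{KS}(q^{2})=\emptyset$.
   Context: Every nonzero rational $\alpha$ is written $\alpha=\alpha_1/\alpha_2$ with $\alpha_1\in\mathbb{Z}$, $\alpha_2$ a positive integer and $\gcd(\alpha_1,\alpha_2)=1$. For an integer $N\ge 2$ and a nonzero rational $\alpha=\alpha_1/\alpha_2$, $N$ is called an $\alpha$-Korselt number if $N\neq\alpha$ and $\alpha_2p-\alpha_1$ divides $\alpha_2N-\alpha_1$ (in $\mathbb{Z}$) for every prime divisor $p$ of $N$. For a subset $\mathbb{A}\subseteq\mathbb{Q}$, $\mathbb{A}\text{-}\mathcal{KS}(N)$ denotes the set of all $\beta\in\mathbb{A}\setminus\{0,N\}$ such that $N$ is a $\beta$-Korselt number. $]0,1[$ denotes the open interval. *)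

(* Defs.v *)
From mathcomp Require Import all_boot all_order all_algebra.
Set Implicit Arguments. Unset Strict Implicit. Unset Printing Implicit Defensive.
Import Order.TTheory GRing.Theory Num.Theory.
Local Open Scope ring_scope.

(* A nonzero rational alpha = alpha1/alpha2 in lowest terms, alpha2 > 0:
   in mathcomp, alpha1 = numq alpha, alpha2 = denq alpha. *)

Definition korselt (alpha : rat) (N : nat) : Prop :=
  (2 <= N)%N /\ alpha != 0 /\ alpha != N%:R /\
  forall p : nat, prime p -> (p %| N)%N ->
    (denq alpha * p%:Z - numq alpha %| denq alpha * N%:Z - numq alpha)%Z.

Definition KS (A : rat -> Prop) (N : nat) (beta : rat) : Prop :=
  A beta /\ beta != 0 /\ beta != N%:R /\ korselt beta N.

Definition unit_open (beta : rat) : Prop := 0 < beta /\ beta < 1.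

(* Main.v *)
Require Import Defs.
From mathcomp Require Import all_boot all_order all_algebra.
From mathcomp Require Import zify ring.
Import Order.TTheory GRing.Theory Num.Theory.
Local Open Scope ring_scope.

Theorem corollary5p6 (q : nat) (hq : prime q) :
  forall beta : rat, ~ KS unit_open (q ^ 2)%N beta.
Proof.
move=> beta [[b0 b1] [_ [_ [_ [_ [_ H]]]]]].
have /dvdzP [k Hk] := H q hq (dvdn_mulr _ (dvdnn q)).
have ha : (0 < numq beta)%R by rewrite numq_gt0.
have hb : (numq beta < denq beta)%R.
  have := lt_ratE beta 1; rewrite /= => E.
  have : lt_rat beta 1 by [].
  by rewrite E /= mulr1 mul1r.
have q2 : (2 <= q)%N by apply: prime_gt1.
move: Hk ha hb; rewrite (_ : ((q ^ 2)%N : int) = q%:Z * q%:Z); last by rewrite -PoszM mulnn.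
set a := numq beta; set d := denq beta.
have : (2 <= q%:Z)%R by rewrite lez_nat.
move: (q%:Z) => Q hQ Hk ha hb.
have e : ((k - Q) * (d * Q - a) = a * (Q - 1))%R.
  rewrite mulrBl -Hk; ring.
have hd : (0 < d * Q - a)%R.
  have : (0 < (d - a) * Q)%R by apply: mulr_gt0; lia.
  nia.
have h1 : (0 < a * (Q - 1))%R by apply: mulr_gt0; lia.
have h2 : (a * (Q - 1) < d * Q - a)%R.
  have : (0 < (d - a) * Q)%R by apply: mulr_gt0; lia.
  nia.
rewrite -e in h1 h2.
case: (ltrP 0 (k - Q)) => hk.
  have : ((d * Q - a) <= (k - Q) * (d * Q - a))%R.
    by rewrite ler_peMl ?(ltW hd) // -gtz0_ge1.
  lia.
have : ((k - Q) * (d * Q - a) <= 0)%R by rewrite pmulr_lle0.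
lia.
Qed.
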